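(* Let $\mathcal{B}$ be a base, $n\ge1$, $A^1,\dots,A^n$ formulas and $\Delta$ a finite set of formulas. Then $\{A^1,\dots,A^n\}\Vdash_{\mathcal{B}}\Delta$ if and only if for every base $\mathcal{C}\supseteq\mathcal{B}$ and all (arbitrary, not necessarily atomic) finite sets of formulas $\Theta^1,\dots,\Theta^n$: if $\Vdash_{\mathcal{C}}\Theta^i,A^i$ for all $1\le i\le n$, then $\Vdash_{\mathcal{C}}\Theta^1,\dots,\Theta^n,\Delta$.
   Context: Fix a countably infinite set $\mathsf{At}$ of atoms. Formulas are built from atoms and the constant $\bot$ using the binary connectives $\land,\lor,\to$. All contexts are finite sets (not multisets) of formulas; a comma denotes union; a subscript $\mathsf{At}$ indicates a finite set of atoms. An atomic sequent has the form $\Gamma_{\mathsf{At}} \Rightarrow \Delta_{\mathsf{At}}$. An atomic rule has finitely many (possibly zero) atomic sequents as premises and one atomic sequent as conclusion; a rule with zero premises is an atomic axiom. A base is a (possibly empty) set of atomic rules; $\mathcal{C}\supseteq\mathcal{B}$ ($\mathcal{C}$ extends $\mathcal{B}$) if $\mathcal{C}$ contains every rule of $\mathcal{B}$. Derivability $\vdash_{\mathcal{B}}$ of atomic sequents is the least relation such that: (Axiom/Weakening) if an atomic axiom with conclusion $\Gamma_{\mathsf{At}}\Rightarrow\Delta_{\mathsf{At}}$ is in $\mathcal{B}$, then $\vdash_{\mathcal{B}} \Theta_{\mathsf{At}},\Gamma_{\mathsf{At}}\Rightarrow\Delta_{\mathsf{At}},\Sigma_{\mathsf{At}}$ for all sets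 of atoms $\Theta_{\mathsf{At}},\Sigma_{\mathsf{At}}$; (Mix) if a rule with premises $\Gamma^i_{\mathsf{At}}\Rightarrow\Delta^i_{\mathsf{At}}$ ($1\le i\le n$) and conclusion $\Gamma_{\mathsf{At}}\Rightarrow\Delta_{\mathsf{At}}$ is in $\mathcal{B}$ and $\vdash_{\mathcal{B}} \Theta^i_{\mathsf{At}},\Gamma^i_{\mathsf{At}}\Rightarrow\Delta^i_{\mathsf{At}},\Sigma^i_{\mathsf{At}}$ for each $i$, then $\vdash_{\mathcal{B}} \Theta^1_{\mathsf{At}},\dots,\Theta^n_{\mathsf{At}},\Gamma_{\mathsf{At}}\Rightarrow\Delta_{\mathsf{At}},\Sigma^1_{\mathsf{At}},\dots,\Sigma^n_{\mathsf{At}}$. Support $\Vdash_{\mathcal{B}}$: (At) $\Vdash_{\mathcal{B}}\Gamma_{\mathsf{At}}$ iff $\vdash_{\mathcal{B}}\ \Rightarrow\Gamma_{\mathsf{At}}$; ($\land$) $\Vdash_{\mathcal{B}} A\land B,\Gamma$ iff $\Vdash_{\mathcal{B}}A,\Gamma$ and $\Vdash_{\mathcal{B}}B,\Gamma$; ($\lor$) $\Vdash_{\mathcal{B}}A\lor B,\Gamma$ iff $\Vdash_{\mathcal{B}}A,B,\Gamma$; ($\to$) $\Vdash_{\mathcal{B}}A\to B,\Gamma$ iff $A\Vdash_{\mathcal{B}}B,\Gamma$; ($\bot$) $\Vdash_{\mathcal{B}}\bot,\Gamma$ iff $\Vdash_{\mathcal{B}}\Gamma$; (Inf) for $n\ge1$,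 $\{A^1,\dots,A^n\}\Vdash_{\mathcal{B}}\Delta$ iff for every $\mathcal{C}\supseteq\mathcal{B}$ and all sets of atoms $\Theta^1_{\mathsf{At}},\dots,\Theta^n_{\mathsf{At}}$, if $\Vdash_{\mathcal{C}}\Theta^i_{\mathsf{At}},A^i$ for all $i$ then $\Vdash_{\mathcal{C}}\Theta^1_{\mathsf{At}},\dots,\Theta^n_{\mathsf{At}},\Delta$ (and $\varnothing\Vdash_{\mathcal{B}}\Delta$ means $\Vdash_{\mathcal{B}}\Delta$). *)

(* Defs.v *)
From HB Require Import structures.
From mathcomp Require Import all_boot.
From mathcomp Require Import finmap.

Set Implicit Arguments.
Unset Strict Implicit.
Unset Printing Implicit Defensive.

Local Open Scope fset_scope.

Inductive form : Type :=
| Atom of nat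
| Bot
| And of form & form
| Or of form & form
| Imp of form & form.

Fixpoint form_enc (F : form) : GenTree.tree nat :=
  match F with
  | Atom p => GenTree.Leaf p
  | Bot => GenTree.Node 0 [::]
  | And A B => GenTree.Node 1 [:: form_enc A; form_enc B]
  | Or A B => GenTree.Node 2 [:: form_enc A; form_enc B]
  | Imp A B => GenTree.Node 3 [:: form_enc A; form_enc B]
  end.

Fixpoint form_dec (t : GenTree.tree nat) : option form :=
  match t with
  | GenTree.Leaf p => Some (Atom p)
  | GenTree.Node 0 [::] => Some Bot
  | GenTree.Node n [:: ta; tb] =>
      match form_dec ta, form_dec tb with
      | Some A, Some B =>
          match n with
          | 1 => Some (And A B)
          | 2 => Some (Or A B)
          | 3 => Some (Imp A B)
          | _ => None
          end
      | _, _ => None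
      end
  | _ => None
  end.

Lemma form_encK : pcancel form_enc form_dec.
Proof. by elim=> //= [A -> B ->|A -> B ->|A -> B ->]. Qed.

HB.instance Definition _ := Countable.copy form (pcan_type form_encK).

(* An atomic sequent Gamma_At => Delta_At is a pair of finite sets of atoms. *)
Definition aseq := ({fset nat} * {fset nat})%type.

Record rule := Rule { prem : seq aseq ; concl : aseq }.

Definition base := rule -> Prop.

Definition extends (C B : base) : Prop := forall r, B r -> C r.

Definition bigU (s : seq {fset nat}) : {fset nat} := \big[fsetU/fset0]_(X <- s) X.

(* |-_B Gamma => Delta : least relation closed under Axiom/Weakening and Mix. *)
Inductive derivable (B : base) : {fset nat} -> {fset nat} -> Prop :=
| der_ax : forall (r : rule) (Th Sg : {fset nat}),
    B r -> prem r = [::] ->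
    derivable B (Th `|` (concl r).1) ((concl r).2 `|` Sg)
| der_mix : forall (r : rule) (ThSg : seq aseq),
    B r -> size ThSg = size (prem r) ->
    (forall i, i < size (prem r) ->
       derivable B ((nth (fset0, fset0) ThSg i).1 `|` (nth (fset0, fset0) (prem r) i).1)
                   ((nth (fset0, fset0) (prem r) i).2 `|` (nth (fset0, fset0) ThSg i).2)) ->
    derivable B (bigU (map fst ThSg) `|` (concl r).1)
                ((concl r).2 `|` bigU (map snd ThSg)).

Definition atomsF (Th : {fset nat}) : {fset form} := [fset Atom p | p in Th].

Definition get_atom (F : form) : option nat :=
  if F is Atom p then Some p else None.

Definition is_atom (F : form) : bool := if F is Atom _ then true else false.

Definition atoms_of (G : {fset form}) : {fset nat} :=
  seq_fset tt (pmap get_atom (enum_fset G)).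

Definition pick_nonatomic (G : {fset form}) : option form :=
  ohead [seq F <- enum_fset G | ~~ is_atom F].

Fixpoint deg (F : form) : nat :=
  match F with
  | Atom _ => 0
  | Bot => 1
  | And A B | Or A B | Imp A B => (deg A + deg B).+1
  end.

Definition measure (G : {fset form}) : nat := \sum_(F <- enum_fset G) deg F.

(* Fuel-based rendering of the clauses (At), (and), (or), (->), (bot), where
   the (->) clause is unfolded through (Inf) with n = 1:
     ||-_B A -> B', Gamma  iff  A ||-_B B', Gamma
       iff for all C >= B and atoms Th, ||-_C Th, A  implies  ||-_C Th, B', Gamma. *)
Fixpoint supp (k : nat) (B : base) (G : {fset form}) {struct k} : Prop :=
  match k with
  | 0 => False
  | k.+1 =>
    match pick_nonatomic G with
    | None => derivable B fset0 (atoms_of G)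
    | Some F =>
      let R := G `\ F in
      match F with
      | Atom _ => False (* unreachable *)
      | Bot => supp k B R
      | And A1 A2 => supp k B (A1 |` R) /\ supp k B (A2 |` R)
      | Or A1 A2 => supp k B (A1 |` (A2 |` R))
      | Imp A1 A2 =>
          forall C : base, extends C B ->
          forall Th : {fset nat},
            supp k C (atomsF Th `|` [fset A1]) ->
            supp k C (atomsF Th `|` (A2 |` R))
      end
    end
  end.

(* ||-_B Gamma  (fuel = measure + 1 suffices) *)
Definition supports (B : base) (G : {fset form}) : Prop :=
  supp (measure G).+1 B G.

Definition bigUF (n : nat) (Th : 'I_n -> {fset form}) : {fset form} :=
  \big[fsetU/fset0]_(i < n) Th i.

(* (Inf): {A^1,...,A^n} ||-_B Delta, for an indexed family A : 'I_n -> form. *)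
Definition infers (B : base) (n : nat) (A : 'I_n -> form) (D : {fset form}) : Prop :=
  if n == 0 then supports B D
  else forall C : base, extends C B ->
       forall Th : 'I_n -> {fset nat},
         (forall i, supports C (atomsF (Th i) `|` [fset A i])) ->
         supports C (bigUF (fun i => atomsF (Th i)) `|` D).

(* Main.v *)
Require Import Defs.
From HB Require Import structures.
From mathcomp Require Import all_boot.
From mathcomp Require Import finmap.
From Stdlib Require Import PropExtensionality FunctionalExtensionality.
From mathcomp Require Import zify.
Set Implicit Arguments.
Unset Strict Implicit.
Unset Printing Implicit Defensive.
Local Open Scope fset_scope.

Lemma ext_refl B : extends B B. Proof. by []. Qed.
Lemma ext_trans B C D : extends C B -> extends D C -> extends D B.
Proof. by move=> h1 h2 r /h1 /h2. Qed.

Lemma bigU_cons (a : {fset nat}) (s : seq {fset nat}) : Defs.bigU (a :: s) = a `|` Defs.bigU s.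
Proof. by rewrite /Defs.bigU big_cons. Qed.

Lemma der_mono B C G D : extends C B -> derivable B G D -> derivable C G D.
Proof.
move=> hC; elim => [r Th Sg Br Hp|r ThSg Br Hsz Hprem IH].
  by apply: der_ax => //; apply: hC.
by apply: der_mix => //; apply: hC.
Qed.

Lemma der_weakR B G D : derivable B G D -> forall D', D `<=` D' -> derivable B G D'.
Proof.
elim => [r Th Sg Br Hp|r ThSg Br Hsz Hprem IH] D' HD.
  have -> : D' = (concl r).2 `|` D'.
    by apply/esym/fsetUidPr; apply: fsubset_trans HD; apply: fsubsetUl.
  exact: der_ax.
case: ThSg Hsz Hprem IH HD => [|t ts] Hsz Hprem IH HD.
  have Hp : prem r = [::] by case: (prem r) Hsz.
  have -> : D' = (concl r).2 `|` D'.
    by apply/esym/fsetUidPr; apply: fsubset_trans HD; apply: fsubsetUl.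
  exact: der_ax.
have E : (concl r).2 `|` Defs.bigU (map snd ((t.1, t.2 `|` D') :: ts)) = D'.
  apply/fsetP => x; rewrite /= bigU_cons !in_fsetU.
  apply/idP/idP; last by move=> ->; rewrite !orbT.
  case/orP=> [h|/orP[/orP[h|->//]|h]]; apply: (fsubsetP HD);
  by rewrite /= bigU_cons !in_fsetU h ?orbT.
rewrite -E.
have -> : Defs.bigU [seq i.1 | i <- t :: ts] = Defs.bigU [seq i.1 | i <- (t.1, t.2 `|` D') :: ts] by [].
apply: der_mix => //.
move=> [|i] hi /=.
  apply: (IH 0 hi); rewrite /=.
  by rewrite fsetUA; apply: fsubsetUl.
by apply: Hprem.
Qed.

Definition cont := base -> {fset nat} -> Prop.

Fixpoint EvF (F : form) (B : base) (K : cont) {struct F} : Prop :=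
  match F with
  | Atom p => K B [fset p]
  | Bot => K B fset0
  | And F1 F2 => EvF F1 B K /\ EvF F2 B K
  | Or F1 F2 => EvF F1 B (fun C P => EvF F2 C (fun C' Q => K C' (P `|` Q)))
  | Imp a b => forall C, extends C B -> forall S : {fset nat},
      EvF a C (fun C' P => derivable C' fset0 (S `|` P)) ->
      EvF b C (fun C' P => K C' (S `|` P))
  end.

Definition BM (K : cont) := forall B C P, extends C B -> K B P -> K C P.
Definition Good (K : cont) := forall B C P Q, extends C B -> P `<=` Q -> K B P -> K C Q.

Lemma Good_BM K : Good K -> BM K.
Proof. by move=> hK B C P hC; apply: hK => //; apply: fsubset_refl. Qed.

Lemma EvF_cov F : forall B (K K' : cont),
  (forall C P, extends C B -> K C P -> K' C P) -> EvF F B K -> EvF F B K'.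
Proof.
elim: F => [p|//=|F1 IH1 F2 IH2|F1 IH1 F2 IH2|a IHa b IHb] B K K' hK /=.
- by apply: hK.
- by apply: hK.
- by case=> h1 h2; split; [apply: IH1 h1|apply: IH2 h2].
- apply: IH1 => C P hC; apply: IH2 => C' Q hC'; apply: hK.
  exact: ext_trans hC hC'.
- move=> H C hC S hS; apply: (IHb _ _ _ _ (H C hC S hS)) => C' P hC'.
  apply: hK; exact: ext_trans hC hC'.
Qed.

Lemma EvF_mono F : forall B C (K : cont), BM K -> extends C B -> EvF F B K -> EvF F C K.
Proof.
elim: F => [p|//=|F1 IH1 F2 IH2|F1 IH1 F2 IH2|a IHa b IHb] B C K hK hC /=.
- exact: hK.
- exact: hK.
- by case=> h1 h2; split; [apply: IH1 h1|apply: IH2 h2].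
- apply: IH1 => // B' C' P hB; apply: IH2 => // B'' C'' Q; exact: hK.
- move=> H C' hC' S hS; apply: H => //; exact: ext_trans hC hC'.
Qed.

Lemma EvF_all F : forall B (K : cont), (forall C P, extends C B -> K C P) -> EvF F B K.
Proof.
elim: F => [p|//=|F1 IH1 F2 IH2|F1 IH1 F2 IH2|a IHa b IHb] B K hK /=.
- exact: hK.
- exact: hK.
- by split; [apply: IH1|apply: IH2].
- apply: IH1 => C P hC; apply: IH2 => C' Q hC'; apply: hK; exact: ext_trans hC hC'.
- move=> C hC S _; apply: IHb => C' P hC'; apply: hK; exact: ext_trans hC hC'.
Qed.

Lemma Good_U (K : cont) T : Good K -> Good (fun C R => K C (T `|` R)).
Proof. by move=> hK B C P Q hC hPQ; apply: hK => //; apply: fsetUS. Qed.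

Lemma EvF_weak F B (K : cont) P : Good K -> K B P -> EvF F B (fun C Q => K C (P `|` Q)).
Proof.
move=> hK hP; apply: EvF_all => C Q hC; apply: hK hP => //; exact: fsubsetUl.
Qed.

Lemma EvF_Good F (K : cont) : Good K -> Good (fun C T => EvF F C (fun C' R => K C' (T `|` R))).
Proof.
move=> hK B C P Q hC hPQ H.
apply: (EvF_mono (B := B)) => //; first by apply: Good_BM; apply: Good_U.
apply: EvF_cov H => C' R _; apply: hK => //; exact: fsetSU.
Qed.

Lemma funext2 (K K' : cont) : (forall C P, K C P = K' C P) -> K = K'.
Proof.
move=> h; apply: functional_extensionality => C; apply: functional_extensionality => P; exact: h.
Qed.

Lemma EvF_congr F B (K K' : cont) : (forall C P, K C P = K' C P) -> EvF F B K = EvF F B K'.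
Proof. by move=> /funext2 ->. Qed.

Lemma EvF_and F : forall B (K1 K2 : cont),
  EvF F B (fun C P => K1 C P /\ K2 C P) = (EvF F B K1 /\ EvF F B K2).
Proof.
elim: F => [p|//=|F1 IH1 F2 IH2|F1 IH1 F2 IH2|a IHa b IHb] B K1 K2 /=; try by [].
- apply: propositional_extensionality; rewrite IH1 IH2; tauto.
- under EvF_congr => C P do rewrite IH2.
  by rewrite IH1.
- apply: propositional_extensionality; split.
    by move=> H; split=> C hC S hS; have := H C hC S hS; rewrite IHb; case.
  by case=> H1 H2 C hC S hS; rewrite IHb; split; [apply: H1|apply: H2].
Qed.

Lemma BM_der S : BM (fun C' P => derivable C' fset0 (S `|` P)).
Proof. move=> B C P h; exact: der_mono. Qed.

Lemma EvF_forall (X : Type) (Hyp : X -> base -> Prop)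
  (hH : forall x B C, extends C B -> Hyp x B -> Hyp x C) G :
  forall B (K : X -> cont),
  EvF G B (fun C Q => forall C', extends C' C -> forall x, Hyp x C' -> K x C' Q) =
  (forall C', extends C' B -> forall x, Hyp x C' -> EvF G C' (K x)).
Proof.
elim: G => [p|//=|F1 IH1 F2 IH2|F1 IH1 F2 IH2|a IHa b IHb] B K /=; try by [].
- rewrite IH1 IH2; apply: propositional_extensionality; split.
    by case=> H1 H2 C hC x hx; split; [apply: H1|apply: H2].
  by move=> H; split=> C hC x hx; have [] := H C hC x hx.
- under EvF_congr => C P do rewrite (IH2 C (fun x C'' Q => K x C'' (P `|` Q))).
  by rewrite (IH1 B (fun x C'' P => EvF F2 C'' (fun C' Q => K x C' (P `|` Q)))).
- apply: propositional_extensionality; split.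
    move=> H C' hC' x hx C hC S hS.
    have := H C (ext_trans hC' hC) S hS.
    rewrite (IHb C (fun x C'' P => K x C'' (S `|` P))).
    by apply=> //; exact: hH hx.
  move=> H C hC S hS.
  rewrite (IHb C (fun x C'' P => K x C'' (S `|` P))) => C'' hC'' x hx.
  have h1 := @EvF_mono a C C'' _ (@BM_der S) hC'' hS. have h2 := H C'' (ext_trans hC hC'') x hx C'' (@ext_refl _) S h1. exact: h2.
Qed.

Lemma EvF_comm F : forall G B (K : base -> {fset nat} -> {fset nat} -> Prop),
  EvF F B (fun C P => EvF G C (fun C' Q => K C' P Q)) =
  EvF G B (fun C Q => EvF F C (fun C' P => K C' P Q)).
Proof.
elim: F => [p|//=|F1 IH1 F2 IH2|F1 IH1 F2 IH2|a IHa b IHb] G B K /=; try by [].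
- by rewrite IH1 IH2 -EvF_and.
- under EvF_congr => C P1 do rewrite (IH2 G C (fun C'' P2 Q => K C'' (P1 `|` P2) Q)).
  by rewrite (IH1 G B (fun C' P1 Q => EvF F2 C' (fun C'' P2 => K C'' (P1 `|` P2) Q))).
- rewrite (EvF_forall (Hyp := fun S C => EvF a C (fun C' P => derivable C' fset0 (S `|` P)))).
    apply: propositional_extensionality; split=> H C hC S hS.
      by rewrite -(IHb G C (fun C'' P Q => K C'' (S `|` P) Q)); apply: H.
    by rewrite (IHb G C (fun C'' P Q => K C'' (S `|` P) Q)); apply: H.
  move=> S B1 C1 hC1; exact: (@EvF_mono a B1 C1 _ (@BM_der S) hC1).
Qed.

Lemma sem_mono a : forall S B C, extends C B ->
  EvF a B (fun C' P => derivable C' fset0 (S `|` P)) ->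
  EvF a C (fun C' P => derivable C' fset0 (S `|` P)).
Proof. move=> S B C hC; exact: (@EvF_mono a B C _ (@BM_der S) hC). Qed.

Lemma EvF_contr F : forall B (K : cont), Good K ->
  EvF F B (fun C P => EvF F C (fun C' Q => K C' (P `|` Q))) = EvF F B K.
Proof.
elim: F => [p|//=|F1 IH1 F2 IH2|F1 IH1 F2 IH2|a IHa b IHb] B K hK /=.
- by rewrite fsetUid.
- by rewrite fsetUid.
- rewrite !EvF_and IH1 // IH2 //; apply: propositional_extensionality; split.
    by case=> [[h1 _] [_ h2]].
  case=> h1 h2; split; split=> //.
    apply: EvF_cov h1 => C P _ hP; exact: EvF_weak.
  apply: EvF_cov h2 => C P _ hP; exact: EvF_weak.
- rewrite -[RHS](IH1 B (fun C' T => EvF F2 C' (fun C3 R => K C3 (T `|` R)))); last exact: EvF_Good.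
  apply: EvF_congr => C P1.
  rewrite (EvF_comm F2 F1 C (fun C'' P2 Q1 => EvF F2 C'' (fun C3 Q2 => K C3 ((P1 `|` P2) `|` (Q1 `|` Q2))))).
  apply: EvF_congr => C' Q1.
  rewrite -(IH2 C' (fun C3 R => K C3 ((P1 `|` Q1) `|` R))); last exact: Good_U.
  apply: EvF_congr => C'' P2; apply: EvF_congr => C3 Q2; by rewrite fsetUACA.
- apply: propositional_extensionality; split.
    move=> H C hC S hS; have := H C hC S hS.
    rewrite (EvF_forall (@sem_mono a) b C (fun S' C'' Q => EvF b C'' (fun C3 P' => K C3 ((S `|` Q) `|` (S' `|` P'))))).
    move=> /(_ C (@ext_refl _) S hS).
    rewrite -(IHb C (fun C3 R => K C3 (S `|` R))); last exact: Good_U.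
    have -> // : (fun C' Q => EvF b C' (fun C3 P' => K C3 ((S `|` Q) `|` (S `|` P')))) =
       (fun C' Q => EvF b C' (fun C3 P' => K C3 (S `|` (Q `|` P')))).
    apply: funext2 => C' Q; apply: EvF_congr => C3 P'.
    by rewrite fsetUACA fsetUid fsetUA.
  move=> H C hC S hS.
  rewrite (EvF_forall (@sem_mono a) b C (fun S' C'' Q => EvF b C'' (fun C3 P' => K C3 ((S `|` Q) `|` (S' `|` P'))))).
  move=> C'' hC'' S' hS'.
  have h1 := H C'' (ext_trans hC hC'') S' hS'.
  have h2 : EvF b C'' (fun C3 R => K C3 ((S `|` S') `|` R)).
    apply: EvF_cov h1 => C3 R _; apply: hK; first exact: ext_refl.
    by apply: fsetSU; apply: fsubsetUr.
  rewrite -(IHb C'' (fun C3 R => K C3 ((S `|` S') `|` R))) in h2; last exact: Good_U.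
  move: h2; apply: EvF_cov => C' Q _; apply: EvF_cov => C3 P' _.
  by rewrite fsetUACA.
Qed.

Fixpoint EvL (l : seq form) (B : base) (K : cont) {struct l} : Prop :=
  match l with
  | [::] => K B fset0
  | F :: l => EvF F B (fun C P => EvL l C (fun C' Q => K C' (P `|` Q)))
  end.

Lemma EvL_congr l B (K K' : cont) : (forall C P, K C P = K' C P) -> EvL l B K = EvL l B K'.
Proof. by move=> /funext2 ->. Qed.

Lemma EvL_cov l : forall B (K K' : cont),
  (forall C P, extends C B -> K C P -> K' C P) -> EvL l B K -> EvL l B K'.
Proof.
elim: l => [|F l IH] B K K' hK /=; first by apply: hK; exact: ext_refl.
apply: EvF_cov => C P hC; apply: IH => C' Q hC'; apply: hK; exact: ext_trans hC hC'.
Qed.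

Lemma EvL_mono l : forall B C (K : cont), BM K -> extends C B -> EvL l B K -> EvL l C K.
Proof.
elim: l => [|F l IH] B C K hK hC /=; first exact: hK.
apply: EvF_mono hC => B' C' P hB; apply: IH hB => B'' C'' Q; exact: hK.
Qed.

Lemma EvL_Good l (K : cont) : Good K -> Good (fun C T => EvL l C (fun C' R => K C' (T `|` R))).
Proof.
move=> hK B C P Q hC hPQ H.
apply: (EvL_mono (B := B)) => //; first by apply: Good_BM; apply: Good_U.
apply: EvL_cov H => C' R _; apply: hK => //; exact: fsetSU.
Qed.

Lemma EvL_swap F G l B (K : cont) : EvL [:: F, G & l] B K = EvL [:: G, F & l] B K.
Proof.
rewrite /= (EvF_comm F G B (fun C' P Q => EvL l C' (fun C'' R => K C'' (P `|` (Q `|` R))))).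
apply: EvF_congr => C Q; apply: EvF_congr => C' P; apply: EvL_congr => C'' R.
by rewrite fsetUCA.
Qed.

Lemma EvL_dup F l B (K : cont) : Good K -> EvL [:: F, F & l] B K = EvL (F :: l) B K.
Proof.
move=> hK /=.
rewrite -[RHS](@EvF_contr F B _ (@EvL_Good l _ hK)).
apply: EvF_congr => C P; apply: EvF_congr => C' Q; apply: EvL_congr => C'' R.
by rewrite fsetUA.
Qed.

Lemma EvL_rem F l : F \in l -> forall B (K : cont), EvL l B K = EvL (F :: rem F l) B K.
Proof.
elim: l => [|G l IH] //= hF B K.
case: eqP => [->//|/eqP hGF].
rewrite inE eq_sym (negbTE hGF) /= in hF.
rewrite -[RHS]/(EvL [:: F, G & rem F l] B K) EvL_swap /=.
apply: EvF_congr => C P; exact: IH.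
Qed.

Lemma EvL_perm l : forall l', perm_eq l l' -> forall B (K : cont), EvL l B K = EvL l' B K.
Proof.
elim: l => [|F l IH] l' hp B K.
  by case: l' hp => // G l' /perm_size.
have hF : F \in l' by rewrite -(perm_mem hp) inE eqxx.
rewrite (EvL_rem hF) /=.
have hp' : perm_eq l (rem F l').
  by rewrite -(perm_cons F); apply: perm_trans hp _; apply: perm_to_rem.
by apply: EvF_congr => C P; apply: IH.
Qed.

Lemma EvL_undup l : forall B (K : cont), Good K -> EvL l B K = EvL (undup l) B K.
Proof.
elim: l => [|F l IH] B K hK; first by [].
rewrite [undup _]/=.
case: ifP => hF.
  rewrite (EvL_perm (l := F :: l) (l' := [:: F, F & rem F l])); last first.
    by rewrite perm_cons; apply: perm_to_rem.
  rewrite EvL_dup // -(IH B K hK).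
  apply: EvL_perm; rewrite perm_sym; exact: perm_to_rem.
rewrite /=; apply: EvF_congr => C P; apply: IH; exact: Good_U.
Qed.

Lemma EvL_set l l' B (K : cont) : Good K -> l =i l' -> EvL l B K = EvL l' B K.
Proof.
move=> hK hl; rewrite EvL_undup // [RHS]EvL_undup //.
apply: EvL_perm; apply: uniq_perm; rewrite ?undup_uniq // => x.
by rewrite !mem_undup.
Qed.

Lemma EvL_cat l1 l2 : forall B (K : cont),
  EvL (l1 ++ l2) B K = EvL l1 B (fun C T => EvL l2 C (fun C' R => K C' (T `|` R))).
Proof.
elim: l1 => [|F l1 IH] B K /=.
  by apply: EvL_congr => C R; rewrite fset0U.
apply: EvF_congr => C P; rewrite IH.
apply: EvL_congr => C' Q; apply: EvL_congr => C'' R; by rewrite fsetUA.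
Qed.

Lemma EvL_atoms s l : forall B (K : cont),
  EvL (map Atom s ++ l) B K = EvL l B (fun C R => K C (seq_fset tt s `|` R)).
Proof.
elim: s => [|p s IH] B K.
  rewrite [map _ _]/= cat0s.
  apply: EvL_congr => C R; congr (K C _); apply/fsetP => x.
  by rewrite in_fsetU seq_fsetE.
rewrite map_cons cat_cons [EvL _ _ _]/=.
rewrite IH; apply: EvL_congr => C R; congr (K C _); apply/fsetP => x.
by rewrite !in_fsetU !seq_fsetE in_fset1 inE orbA.
Qed.

Definition KD : cont := fun C P => derivable C fset0 P.
Lemma Good_KD : Good KD.
Proof. move=> B C P Q hC hPQ h; apply: der_weakR hPQ; exact: der_mono h. Qed.

Definition SEM B (G : {fset form}) := EvL (enum_fset G) B KD.

Lemma memE (G : {fset form}) x : (x \in enum_fset G) = (x \in G).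
Proof. by []. Qed.

Lemma measure_perm (G : {fset form}) l : perm_eq (enum_fset G) l ->
  measure G = \sum_(F <- l) deg F.
Proof. by move=> hp; rewrite /measure (perm_big _ hp). Qed.

Lemma sum_undup (s : seq form) : (\sum_(F <- undup s) deg F <= \sum_(F <- s) deg F)%N.
Proof.
elim: s => [|x s IH] //=; case: ifP => _; rewrite ?big_cons.
  exact: leq_trans IH (leq_addl _ _).
by rewrite leq_add2l.
Qed.

Lemma measureU (X Y : {fset form}) : (measure (X `|` Y) <= measure X + measure Y)%N.
Proof.
rewrite (@measure_perm _ (undup (enum_fset X ++ enum_fset Y))); last first.
  apply: uniq_perm; rewrite ?fset_uniq ?undup_uniq // => x.
  by rewrite mem_undup mem_cat memE in_fsetU.
rewrite /measure -big_cat; exact: sum_undup.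
Qed.

Lemma measure1 a : measure [fset a] = deg a.
Proof.
rewrite (@measure_perm _ [:: a]) ?big_seq1 //.
apply: uniq_perm; rewrite ?fset_uniq // => x.
by rewrite memE in_fset1 inE.
Qed.

Lemma measure_atomsF Th : measure (atomsF Th) = 0.
Proof.
rewrite /measure big_seq big1 // => F; rewrite memE /atomsF.
by case/imfsetP => p _ ->.
Qed.

Lemma measure_split (G : {fset form}) F : F \in G -> measure G = (deg F + measure (G `\ F))%N.
Proof.
move=> hF; rewrite (@measure_perm _ (F :: enum_fset (G `\ F))) ?big_cons //.
apply: uniq_perm; rewrite /= ?fset_uniq ?andbT //.
  by rewrite memE in_fsetD1 eqxx.
move=> x; rewrite inE !memE in_fsetD1.
by case: eqP => [->|]; rewrite ?hF.
Qed.

Lemma pick_some G F : pick_nonatomic G = Some F -> F \in G /\ ~~ is_atom F.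
Proof.
rewrite /pick_nonatomic.
case hs: [seq F0 <- enum_fset G | ~~ is_atom F0] => [|x t] //= [<-].
have : x \in [seq F0 <- enum_fset G | ~~ is_atom F0] by rewrite hs inE eqxx.
by rewrite mem_filter => /andP[-> ->].
Qed.

Lemma filter_nil_all (s : seq form) : [seq F <- s | ~~ is_atom F] = [::] -> all is_atom s.
Proof.
elim: s => //= x s IH; case: ifP => //= h /IH ->; rewrite andbT; exact: negbFE.
Qed.

Lemma pick_none G : pick_nonatomic G = None -> all is_atom (enum_fset G).
Proof.
rewrite /pick_nonatomic.
case hs: [seq F0 <- enum_fset G | ~~ is_atom F0] => [|x t] //= _.
exact: filter_nil_all.
Qed.

Lemma all_atom_map s : all is_atom s -> s = map Atom (pmap get_atom s).
Proof.
elim: s => //= x s IH /andP[]; case: x => //= p _ /IH {1}->; by [].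
Qed.

Lemma SEM_cons B A (R : {fset form}) : SEM B (A |` R) = EvL (A :: enum_fset R) B KD.
Proof.
apply: EvL_set; first exact: Good_KD.
by move=> x; rewrite memE in_fsetU in_fset1 inE memE.
Qed.

Lemma SEM_cons2 B A1 A2 (R : {fset form}) :
  SEM B (A1 |` (A2 |` R)) = EvL [:: A1, A2 & enum_fset R] B KD.
Proof.
apply: EvL_set; first exact: Good_KD.
by move=> x; rewrite memE !in_fsetU !in_fset1 !inE memE.
Qed.

Lemma seq_fset_enum (Th : {fset nat}) : seq_fset tt (enum_fset Th) = Th.
Proof. by apply/fsetP => x; rewrite seq_fsetE. Qed.

Lemma SEM_atomsU B Th (Y : {fset form}) :
  SEM B (atomsF Th `|` Y) = EvL (enum_fset Y) B (fun C R => KD C (Th `|` R)).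
Proof.
rewrite /SEM (@EvL_set _ (map Atom (enum_fset Th) ++ enum_fset Y)); last first.
- move=> x; rewrite memE in_fsetU mem_cat memE /atomsF; congr (_ || _).
  apply/imfsetP/mapP => [[p hp ->]|[p hp ->]]; by exists p.
- exact: Good_KD.
rewrite EvL_atoms seq_fset_enum; by [].
Qed.

Lemma supp_SEM k : forall B G, (measure G < k)%N -> (supp k B G <-> SEM B G).
Proof.
elim: k => [|k IH] B G hk //=.
case E: (pick_nonatomic G) => [F|]; last first.
  have hall := pick_none E.
  rewrite /SEM {1}(all_atom_map hall) -[map _ _]cats0 EvL_atoms /= fsetU0.
  by [].
have [hFG hFna] := pick_some E.
have hm := measure_split hFG.
have hG : SEM B G = EvL (F :: enum_fset (G `\ F)) B KD.
  apply: EvL_set; first exact: Good_KD.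
  move=> x; rewrite memE inE memE in_fsetD1.
  by case: eqP => [->|]; rewrite ?hFG.
rewrite hG; set R := G `\ F; rewrite -/R in hm; clearbody R.
have hR : forall A, (deg A + measure R < k)%N -> (supp k B (A |` R) <-> SEM B (A |` R)).
  move=> A hA; apply: IH; apply: leq_ltn_trans hA.
  by rewrite -(measure1 A); exact: measureU.
case: F hFG hFna hm {E hG} => [p||A1 A2|A1 A2|a b] hFG hFna hm //.
- rewrite IH; last by rewrite hm /= in hk; lia.
  rewrite /SEM /=; split; apply: EvL_cov => C P _; by rewrite fset0U.
- rewrite hR; last by rewrite hm /= in hk; lia.
  rewrite hR; last by rewrite hm /= in hk; lia.
  by rewrite !SEM_cons.
- rewrite IH; last first.
    rewrite hm /= in hk.
    have := measureU [fset A1] (A2 |` R); have := measureU [fset A2] R.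
    rewrite !measure1; lia.
  rewrite SEM_cons2 /=.
  have -> // : (fun C P => EvF A2 C (fun C' Q => EvL (enum_fset R) C' (fun C'' R0 => KD C'' (P `|` (Q `|` R0))))) =
    (fun C P => EvF A2 C (fun C' Q => EvL (enum_fset R) C' (fun C'' R0 => KD C'' ((P `|` Q) `|` R0)))).
  apply: funext2 => C P; apply: EvF_congr => C' Q; apply: EvL_congr => C'' R0; by rewrite fsetUA.
- rewrite hm /= in hk.
  have h1 : forall C Th, supp k C (atomsF Th `|` [fset a]) <-> EvF a C (fun C' P => derivable C' fset0 (Th `|` P)).
    move=> C Th; rewrite IH; last first.
      have := measureU (atomsF Th) [fset a]; rewrite measure_atomsF measure1; lia.
    rewrite SEM_atomsU (@EvL_set _ [:: a]); last first.
    - by move=> x; rewrite memE in_fset1 inE.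
    - exact: Good_U Good_KD.
    by rewrite /= /KD; split; apply: EvF_cov => C' P _; rewrite fsetU0.
  have h2 : forall C Th, supp k C (atomsF Th `|` (b |` R)) <->
      EvF b C (fun C' P => EvL (enum_fset R) C' (fun C'' Q => KD C'' ((Th `|` P) `|` Q))).
    move=> C Th; rewrite IH; last first.
      have := measureU (atomsF Th) (b |` R); have := measureU [fset b] R.
      rewrite measure_atomsF measure1; lia.
    rewrite SEM_atomsU (@EvL_set _ (b :: enum_fset R)); last first.
    - by move=> x; rewrite memE in_fsetU in_fset1 inE memE.
    - exact: Good_U Good_KD.
    rewrite /=.
    have -> // : (fun C' P => EvL (enum_fset R) C' (fun C'' Q => KD C'' (Th `|` (P `|` Q)))) =
      (fun C' P => EvL (enum_fset R) C' (fun C'' Q => KD C'' ((Th `|` P) `|` Q))).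
    apply: funext2 => C' P; apply: EvL_congr => C'' Q; by rewrite fsetUA.
  split=> H C hC Th.
    by move=> /h1 /(H C hC Th) /h2.
  by move=> /h1 /(H C hC Th) /h2.
Qed.

Lemma supports_SEM B G : supports B G <-> SEM B G.
Proof. exact: supp_SEM. Qed.

Lemma SEM_mono B C G : extends C B -> SEM B G -> SEM C G.
Proof. move=> hC; apply: EvL_mono hC; exact: Good_BM Good_KD. Qed.

Lemma SEM_U B (X Y : {fset form}) :
  SEM B (X `|` Y) = EvL (enum_fset X) B (fun C T => EvL (enum_fset Y) C (fun C' R => KD C' (T `|` R))).
Proof.
rewrite /SEM (@EvL_set _ (enum_fset X ++ enum_fset Y)); last first.
- by move=> x; rewrite memE in_fsetU mem_cat.
- exact: Good_KD.
exact: EvL_cat.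
Qed.

Lemma cutL C (Th X : {fset form}) A :
  SEM C (Th `|` [fset A]) ->
  (forall C', extends C' C -> forall S, SEM C' (atomsF S `|` [fset A]) -> SEM C' (atomsF S `|` X)) ->
  SEM C (Th `|` X).
Proof.
rewrite !SEM_U => h H; apply: EvL_cov h => C' T hC' hT.
have := H C' hC' T; rewrite !SEM_atomsU; apply; exact: hT.
Qed.

Lemma bigUF_split n (Th : 'I_n -> {fset form}) j :
  bigUF Th = Th j `|` \big[fsetU/fset0]_(i | i != j) Th i.
Proof. by rewrite /bigUF (bigD1 j). Qed.

Theorem lemma2 (B : base) (n : nat) (hn : 1 <= n) (A : 'I_n -> form)
    (D : {fset form}) :
  infers B A D <->
  (forall C : base, extends C B ->
   forall Th : 'I_n -> {fset form},
     (forall i, supports C (Th i `|` [fset A i])) ->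
     supports C (bigUF Th `|` D)).
Proof.
have hn0 : n == 0 = false by case: n hn {A}.
rewrite /infers hn0; split; last first.
  move=> H C hC Th hTh; exact: (H C hC (fun i => atomsF (Th i)) hTh).
move=> hinf.
have step : forall m, m <= n -> forall C, extends C B -> forall Th : 'I_n -> {fset form},
    (forall i : 'I_n, m <= i -> exists S, Th i = atomsF S) ->
    (forall i, supports C (Th i `|` [fset A i])) -> supports C (bigUF Th `|` D).
  elim=> [|m IHm] hm C hC Th hat hsup.
    have [S hS] := fin_all_exists (fun i => hat i (leq0n i)).
    have -> : bigUF Th = bigUF (fun i => atomsF (S i)).
      by rewrite /bigUF; apply: eq_bigr => i _; rewrite hS.
    apply: hinf => // i; rewrite -hS; exact: hsup.
  pose j := Ordinal hm.
  apply/supports_SEM; rewrite (bigUF_split Th j) -fsetUA.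
  apply: cutL (iffLR (supports_SEM _ _) (hsup j)) _ => C' hC' S hS.
  pose Th' := fun i => if i == j then atomsF S else Th i.
  have := IHm (ltnW hm) C' (ext_trans hC hC') Th'.
  have -> : bigUF Th' = atomsF S `|` \big[fsetU/fset0]_(i | i != j) Th i.
    rewrite (bigUF_split Th' j) /Th' eqxx; congr (_ `|` _).
    by apply: eq_bigr => i /negbTE ->.
  rewrite fsetUA => h; apply/supports_SEM; apply: h.
    move=> i hi; rewrite /Th'; case: eqP => [_|hij]; first by exists S.
    apply: hat; rewrite ltn_neqAle hi andbT; apply/eqP => him; apply: hij.
    by apply: val_inj; rewrite /= -him.
  move=> i; rewrite /Th'; case: eqP => [->|_].
    by apply/supports_SEM.
  apply/supports_SEM; apply: (SEM_mono hC'); apply/supports_SEM; exact: hsup.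
move=> C hC Th hTh; apply: (step n (leqnn n)) => // i.
by rewrite leqNgt ltn_ord.
Qed.
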